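(* For $k\in\mathcal N$, let $\pi^k$ be the stationary distribution of the single-server queue under the threshold policy with threshold $k$ (active at states $0,\dots,k$, passive at states $\ge k+1$). Then $\sum_{j=0}^k \pi^k(j)$ is an increasing function of $k$.
   Context: Single-server queue: Bernoulli($p$) arrivals, $X_{t+1}=X_t-D_{t+1}+\nu_t\xi_{t+1}$ on $\mathcal N=\{0,1,\dots\}$, $\nu_t\in\{0,1\}$ with arrivals admitted only when $\nu_t=1$; given $X_t=x\ge1$, $D_{t+1}\sim\mathrm{Binomial}(x,q/x)$, no departures at $x=0$; $1>q>2p>0$. Under the threshold-$k$ policy the recurrent class is $\{0,1,\dots,k+1\}$. *)

(* Defs.v *)
From Stdlib Require Import Reals Lra Lia Arith.
Open Scope R_scope.

Definition binom_pmf (n : nat) (r : R) (d : nat) : R :=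
  if (d <=? n)%nat then C n d * r ^ d * (1 - r) ^ (n - d) else 0.

(* Law of the number of departures D_{t+1} given X_t = x:
   Binomial(x, q/x) for x >= 1, and D = 0 almost surely at x = 0. *)
Definition dep_pmf (q : R) (x d : nat) : R :=
  match x with
  | O => if (d =? 0)%nat then 1 else 0
  | S _ => binom_pmf x (q / INR x) d
  end.

Definition nu (k x : nat) : R := if (x <=? k)%nat then 1 else 0.

(* One-step transition probability x -> y of
   X_{t+1} = X_t - D_{t+1} + nu_t xi_{t+1}, xi ~ Bernoulli(p) independent of D. *)
Definition trans (p q : R) (k x y : nat) : R :=
  sum_f_R0 (fun d =>
    dep_pmf q x d *
      ((if (y =? x - d)%nat then 1 - nu k x * p else 0) +
       (if (y =? x - d + 1)%nat then nu k x * p else 0))) x.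

Definition stationary (p q : R) (k : nat) (pi : nat -> R) : Prop :=
  (forall y, 0 <= pi y) /\
  infinite_sum pi 1 /\
  (forall y, infinite_sum (fun x => pi x * trans p q k x y) (pi y)).

(* Main.v *)
Require Import Defs.
From Stdlib Require Import Reals Lra Lia Arith FunctionalExtensionality.
Open Scope R_scope.

Lemma sum_swap (f : nat -> nat -> R) n m :
  sum_f_R0 (fun i => sum_f_R0 (fun j => f i j) m) n =
  sum_f_R0 (fun j => sum_f_R0 (fun i => f i j) n) m.
Proof.
  induction n.
  - simpl. apply sum_eq; intros; reflexivity.
  - rewrite tech5, IHn, <- sum_plus. apply sum_eq; intros; simpl; reflexivity.
Qed.

Lemma sum_ind0 (b : nat -> R) (c : R) n :
  sum_f_R0 (fun d => b d + (if (d =? 0)%nat then c else 0)) n = sum_f_R0 b n + c.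
Proof.
  induction n; simpl. - ring.
  - rewrite IHn. ring.
Qed.

Lemma sum_indic (a N : nat) (c : R) (g : nat -> R) :
  sum_f_R0 (fun y => (if (y =? a)%nat then c else 0) * g y) N =
  if (a <=? N)%nat then c * g a else 0.
Proof.
  induction N.
  - destruct a; simpl; ring.
  - rewrite tech5, IHN. destruct (Nat.eqb_spec (S N) a).
    + subst. rewrite (proj2 (Nat.leb_nle (S N) N)) by lia.
      rewrite Nat.leb_refl. ring.
    + destruct (Nat.leb_spec a N); destruct (Nat.leb_spec a (S N)); try lia; ring.
Qed.

Lemma sum_nonneg (f : nat -> R) n :
  (forall j, (j <= n)%nat -> 0 <= f j) -> 0 <= sum_f_R0 f n.
Proof.
  induction n; intros H. simpl; apply H; lia.
  rewrite tech5. assert (0 <= f (S n)) by (apply H; lia).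
  assert (0 <= sum_f_R0 f n) by (apply IHn; intros; apply H; lia). lra.
Qed.

Lemma sum_ge_term (f : nat -> R) n i :
  (forall j, (j <= n)%nat -> 0 <= f j) -> (i <= n)%nat -> f i <= sum_f_R0 f n.
Proof.
  induction n; intros H Hi.
  - replace i with 0%nat by lia. simpl; lra.
  - rewrite tech5. destruct (Nat.eq_dec i (S n)).
    + subst. assert (0 <= sum_f_R0 f n) by (apply sum_nonneg; intros; apply H; lia).
      lra.
    + assert (f i <= sum_f_R0 f n) by (apply IHn; [intros; apply H; lia| lia]).
      assert (0 <= f (S n)) by (apply H; lia). lra.
Qed.
Lemma C_pos n d : 0 < C n d.
Proof. unfold C. apply Rdiv_lt_0_compat. apply INR_fact_lt_0.
  apply Rmult_lt_0_compat; apply INR_fact_lt_0. Qed.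

Lemma C_n0 n : C n 0 = 1.
Proof. unfold C. rewrite Nat.sub_0_r. simpl. field.
  apply Rgt_not_eq, INR_fact_lt_0. Qed.

Lemma C_nn n : C n n = 1.
Proof. unfold C. rewrite Nat.sub_diag. simpl. field.
  apply Rgt_not_eq, INR_fact_lt_0. Qed.

Section Dep.
Variables q : R.
Hypothesis q0 : 0 < q.
Hypothesis q1 : q < 1.

Lemma r_bounds n : 0 < q / INR (S n) < 1.
Proof.
  assert (1 <= INR (S n)) by (rewrite S_INR; pose proof (pos_INR n); lra).
  split. apply Rdiv_lt_0_compat; lra.
  apply (Rmult_lt_reg_r (INR (S n))). lra. unfold Rdiv. rewrite Rmult_assoc, Rinv_l by lra. lra.
Qed.

Lemma dep_nonneg x d : 0 <= dep_pmf q x d.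
Proof.
  destruct x.
  - simpl; destruct d; simpl; lra.
  - unfold dep_pmf, binom_pmf. destruct (d <=? S x)%nat; [|lra].
    pose proof (r_bounds x). pose proof (C_pos (S x) d).
    apply Rmult_le_pos. apply Rmult_le_pos. lra. apply pow_le; lra. apply pow_le; lra.
Qed.

Lemma dep_sum x : sum_f_R0 (dep_pmf q x) x = 1.
Proof.
  destruct x. simpl. reflexivity.
  unfold dep_pmf. set (r := q / INR (S x)).
  transitivity (sum_f_R0 (fun i => C (S x) i * r ^ i * (1 - r) ^ (S x - i)) (S x)).
  - apply sum_eq. intros i Hi. unfold binom_pmf. rewrite (proj2 (Nat.leb_le _ _) Hi). reflexivity.
  - rewrite <- binomial. replace (r + (1 - r)) with 1 by ring. apply pow1.
Qed.

Lemma dep0 x : dep_pmf q x 0 = (1 - q / INR x) ^ x.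
Proof.
  destruct x. reflexivity. unfold dep_pmf, binom_pmf.
  rewrite (proj2 (Nat.leb_le 0 (S x))) by lia.
  rewrite C_n0, Nat.sub_0_r, pow_O. ring.
Qed.

Lemma dep0_pos x : 0 < dep_pmf q x 0.
Proof.
  destruct x. simpl; lra. rewrite dep0. pose proof (r_bounds x). apply pow_lt. lra.
Qed.

Lemma depx_pos x : 0 < dep_pmf q x x.
Proof.
  destruct x. simpl; lra. unfold dep_pmf, binom_pmf. rewrite Nat.leb_refl, C_nn, Nat.sub_diag, pow_O.
  pose proof (r_bounds x). rewrite Rmult_1_r, Rmult_1_l. apply pow_lt. lra.
Qed.

Lemma bern_aux (r : R) m : 0 <= r <= 1 -> (1 - r) ^ m * (1 + INR m * r) <= 1.
Proof.
  intros Hr. induction m.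
  - simpl. lra.
  - rewrite S_INR. simpl pow.
    assert (0 <= (1 - r) ^ m) by (apply pow_le; lra).
    assert ((1 - r) * (1 + (INR m + 1) * r) <= 1 + INR m * r).
    { pose proof (pos_INR m). nra. }
    nra.
Qed.

Lemma dep0_le p x : 0 < p -> 2 * p < q -> (1 <= x)%nat -> dep_pmf q x 0 <= 1 - p.
Proof.
  intros hp h2p hx. destruct x. lia. rewrite dep0.
  pose proof (r_bounds x).
  pose proof (bern_aux (q / INR (S x)) (S x) ltac:(lra)).
  replace (INR (S x) * (q / INR (S x))) with q in H0.
  2:{ field. apply Rgt_not_eq. apply lt_0_INR. lia. }
  assert (0 <= (1 - q / INR (S x)) ^ S x) by (apply pow_le; lra).
  nra.
Qed.
End Dep.

Definition Enu (p q v : R) (g : nat -> R) (x : nat) : R :=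
  sum_f_R0 (fun d => dep_pmf q x d * ((1 - v * p) * g (x - d)%nat + v * p * g (x - d + 1)%nat)) x.

Lemma trans_sum p q k x N g : (x <= N)%nat -> (nu k x = 0 \/ (x + 1 <= N)%nat) ->
  sum_f_R0 (fun y => trans p q k x y * g y) N = Enu p q (nu k x) g x.
Proof.
  intros HxN Hc. unfold trans.
  transitivity (sum_f_R0 (fun y => sum_f_R0 (fun d => dep_pmf q x d *
      ((if (y =? x - d)%nat then 1 - nu k x * p else 0) +
       (if (y =? x - d + 1)%nat then nu k x * p else 0)) * g y) x) N).
  { apply sum_eq; intros y _. rewrite Rmult_comm, scal_sum. apply sum_eq; intros; ring. }
  rewrite sum_swap. unfold Enu. apply sum_eq. intros d Hd.
  transitivity (dep_pmf q x d * (sum_f_R0 (fun y => (if (y =? x - d)%nat then 1 - nu k x * p else 0) * g y) N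
     + sum_f_R0 (fun y => (if (y =? x - d + 1)%nat then nu k x * p else 0) * g y) N)).
  { rewrite Rmult_plus_distr_l, !scal_sum, <- sum_plus. apply sum_eq; intros; ring. }
  rewrite !sum_indic.
  rewrite (proj2 (Nat.leb_le (x - d) N)) by lia.
  destruct (Nat.leb_spec (x - d + 1) N). reflexivity.
  destruct Hc as [Hc|Hc]. rewrite Hc. ring. lia.
Qed.

Lemma fin_inf (f : nat -> R) M l :
  (forall n, (n > M)%nat -> f n = 0) -> infinite_sum f l -> l = sum_f_R0 f M.
Proof.
  intros H Hs. apply (uniqueness_sum f); [assumption|].
  assert (Hc : forall n, (M <= n)%nat -> sum_f_R0 f n = sum_f_R0 f M).
  { intros n Hn. induction Hn. reflexivity. rewrite tech5, IHHn, H by lia. ring. }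
  intros eps He. exists M. intros n Hn. rewrite Hc by lia. unfold Rdist.
  rewrite Rminus_diag, Rabs_R0. lra.
Qed.

Lemma inf_finite_sum (F : nat -> nat -> R) (L : nat -> R) N :
  (forall y, (y <= N)%nat -> infinite_sum (F y) (L y)) ->
  infinite_sum (fun x => sum_f_R0 (fun y => F y x) N) (sum_f_R0 L N).
Proof.
  induction N; intros H.
  - simpl. apply H. lia.
  - assert (H1 := IHN (fun y Hy => H y ltac:(lia))).
    assert (H2 := H (S N) ltac:(lia)).
    assert (H3 := CV_plus _ _ _ _ H1 H2).
    intros eps He. destruct (H3 eps He) as [M HM]. exists M. intros n Hn.
    rewrite tech5.
    replace (sum_f_R0 (fun x => sum_f_R0 (fun y => F y x) (S N)) n) with
      (sum_f_R0 (fun x => sum_f_R0 (fun y => F y x) N) n + sum_f_R0 (F (S N)) n).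
    apply HM; assumption.
    rewrite <- sum_plus. apply sum_eq. intros; rewrite tech5; reflexivity.
Qed.

Lemma partial_mono (f : nat -> R) m n :
  (forall i, 0 <= f i) -> (m <= n)%nat -> sum_f_R0 f m <= sum_f_R0 f n.
Proof.
  intros H Hmn. induction Hmn. lra. rewrite tech5. specialize (H (S m0)). lra.
Qed.

Lemma nu_le k x : (x <= k)%nat -> nu k x = 1.
Proof. intros. unfold nu. rewrite (proj2 (Nat.leb_le _ _) H). reflexivity. Qed.
Lemma nu_gt k x : (k < x)%nat -> nu k x = 0.
Proof. intros. unfold nu. rewrite (proj2 (Nat.leb_nle x k)) by lia. reflexivity. Qed.
Lemma nu_01 k x : nu k x = 0 \/ nu k x = 1.
Proof. unfold nu. destruct (x <=? k)%nat; auto. Qed.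

Section Chain.
Variables p q : R.
Hypothesis hp : 0 < p.
Hypothesis h2p : 2 * p < q.
Hypothesis hq : q < 1.

Lemma q0 : 0 < q. Proof. lra. Qed.

Lemma Enu_one v x : Enu p q v (fun _ => 1) x = 1.
Proof.
  unfold Enu. transitivity (sum_f_R0 (dep_pmf q x) x). apply sum_eq; intros; ring. apply dep_sum.
Qed.

Lemma trans_nonneg k x y : 0 <= trans p q k x y.
Proof.
  unfold trans. apply sum_nonneg. intros d _. apply Rmult_le_pos. apply dep_nonneg; lra.
  destruct (nu_01 k x) as [E|E]; rewrite E;
  destruct (y =? x - d)%nat; destruct (y =? x - d + 1)%nat; lra.
Qed.

Lemma trans0_pos k x : (k < x)%nat -> 0 < trans p q k x 0.
Proof.
  intros Hx. unfold trans.
  apply Rlt_le_trans with (dep_pmf q x x * ((if (0 =? x - x)%nat then 1 - nu k x * p else 0) +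
          (if (0 =? x - x + 1)%nat then nu k x * p else 0))).
  - rewrite Nat.sub_diag, nu_gt by assumption. simpl.
    pose proof (depx_pos q q0 hq x). lra.
  - apply (sum_ge_term (fun d => dep_pmf q x d * ((if (0 =? x - d)%nat then 1 - nu k x * p else 0) +
          (if (0 =? x - d + 1)%nat then nu k x * p else 0)))); [|lia].
    intros d _. apply Rmult_le_pos. apply dep_nonneg; lra.
    rewrite nu_gt by assumption.
    destruct (0 =? x - d)%nat; destruct (0 =? x - d + 1)%nat; lra.
Qed.

Section Stat.
Variables (k : nat) (pi : nat -> R).
Hypothesis hst : stationary p q k pi.

Lemma support x : (S k < x)%nat -> pi x = 0.
Proof.
  destruct hst as [Hnn [Htot Heq]].
  assert (H := inf_finite_sum (fun y x => pi x * trans p q k x y) pi (S k) (fun y _ => Heq y)).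
  set (b := fun x => sum_f_R0 (fun y => pi x * trans p q k x y) (S k)) in H.
  assert (Hb0 : forall x, 0 <= b x).
  { intros z. apply sum_nonneg. intros. apply Rmult_le_pos; auto. apply trans_nonneg. }
  assert (Hbe : forall x, b x = pi x * sum_f_R0 (fun y => trans p q k x y * 1) (S k)).
  { intros z. unfold b. rewrite scal_sum. apply sum_eq; intros; ring. }
  assert (Hlow : forall x, (x <= S k)%nat -> b x = pi x).
  { intros z Hz. rewrite Hbe, trans_sum, Enu_one. ring. assumption.
    destruct (Nat.leb_spec z k). right; lia. left; apply nu_gt; lia. }
  assert (HS : sum_f_R0 b (S k) = sum_f_R0 pi (S k)).
  { apply sum_eq. intros; apply Hlow; assumption. }
  assert (Hup : forall n, sum_f_R0 b n <= sum_f_R0 pi (S k)).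
  { apply growing_ineq. intro n. rewrite tech5. specialize (Hb0 (S n)). lra. exact H. }
  intros Hx. destruct x. lia.
  assert (sum_f_R0 b (S k) <= sum_f_R0 b x) by (apply partial_mono; auto; lia).
  specialize (Hup (S x)). rewrite tech5 in Hup.
  assert (Hbx : b (S x) = 0) by (specialize (Hb0 (S x)); lra).
  rewrite Hbe in Hbx.
  assert (0 < sum_f_R0 (fun y => trans p q k (S x) y * 1) (S k)).
  { apply Rlt_le_trans with (trans p q k (S x) 0 * 1).
    rewrite Rmult_1_r. apply trans0_pos; lia.
    apply (sum_ge_term (fun y => trans p q k (S x) y * 1)); [|lia].
    intros; rewrite Rmult_1_r; apply trans_nonneg. }
  apply Rmult_integral in Hbx. destruct Hbx; [assumption|lra].
Qed.

Lemma stat_fin y : pi y = sum_f_R0 (fun x => pi x * trans p q k x y) (S k).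
Proof.
  destruct hst as [_ [_ Heq]]. apply fin_inf; [|apply Heq].
  intros n Hn. rewrite support by lia. ring.
Qed.

Lemma tot_fin : sum_f_R0 pi (S k) = 1.
Proof.
  destruct hst as [_ [Htot _]]. symmetry. apply fin_inf; [|apply Htot].
  intros n Hn. apply support. lia.
Qed.

Lemma duality (g : nat -> R) :
  sum_f_R0 (fun x => pi x * (g x - Enu p q (nu k x) g x)) (S k) = 0.
Proof.
  assert (sum_f_R0 (fun x => pi x * g x) (S k) = sum_f_R0 (fun x => pi x * Enu p q (nu k x) g x) (S k)).
  { transitivity (sum_f_R0 (fun y => sum_f_R0 (fun x => pi x * trans p q k x y * g y) (S k)) (S k)).
    - apply sum_eq. intros y _. rewrite stat_fin at 1. rewrite Rmult_comm, scal_sum.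
      apply sum_eq; intros; ring.
    - rewrite <- sum_swap. apply sum_eq. intros x Hx.
      transitivity (pi x * sum_f_R0 (fun y => trans p q k x y * g y) (S k)).
      + rewrite scal_sum. apply sum_eq; intros; ring.
      + rewrite trans_sum; [reflexivity|assumption|].
        destruct (Nat.leb_spec x k). right; lia. left; apply nu_gt; lia. }
  rewrite (tech11 _ (fun x => pi x * g x) (fun x => pi x * Enu p q (nu k x) g x)).
  - lra.
  - intros; ring.
Qed.
End Stat.

Definition Ract (g : nat -> R) m := Enu p q 1 (fun i => if (i <=? m)%nat then g i else 0) m.

Fixpoint phil (n : nat) : nat -> R :=
  match n with
  | O => fun _ => 0
  | S m => let g := phil m in
      fun i => if (i <=? m)%nat then g i else (g m - 1 - Ract g m) / (dep_pmf q m 0 * p)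
  end.

Definition phi n := phil n n.

Lemma phil_stable i m : (i <= m)%nat -> phil m i = phi i.
Proof.
  intros H. induction H as [|m' H IH]. reflexivity.
  simpl. rewrite (proj2 (Nat.leb_le i m') H). exact IH.
Qed.

Lemma phi_S m : phi (S m) = (phi m - 1 - Ract phi m) / (dep_pmf q m 0 * p).
Proof.
  unfold phi at 1. cbn [phil]. rewrite (proj2 (Nat.leb_nle (S m) m)) by lia.
  f_equal. f_equal. unfold Ract. f_equal.
  apply functional_extensionality. intros i. destruct (Nat.leb_spec i m); [|reflexivity].
  apply phil_stable. assumption.
Qed.

Lemma phi_eq y : Enu p q 1 phi y = phi y - 1.
Proof.
  assert (Hf := dep0_pos q q0 hq y).
  assert (E : Enu p q 1 phi y = Ract phi y + dep_pmf q y 0 * (1 * p) * phi (S y)).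
  { unfold Ract, Enu. rewrite <- sum_ind0. apply sum_eq. intros d Hd.
    destruct d.
    - rewrite Nat.sub_0_r. rewrite Nat.leb_refl.
      rewrite (proj2 (Nat.leb_nle (y + 1) y)) by lia. simpl Nat.eqb.
      replace (y + 1)%nat with (S y) by lia. ring.
    - rewrite (proj2 (Nat.leb_le (y - S d) y)) by lia.
      rewrite (proj2 (Nat.leb_le (y - S d + 1) y)) by lia. simpl Nat.eqb. cbv iota; ring. }
  rewrite E, phi_S. field. lra.
Qed.

Lemma sum_dep_const x c : sum_f_R0 (fun d => dep_pmf q x d * c) x = c.
Proof. rewrite <- scal_sum, dep_sum. ring. Qed.

Lemma phi_step n : (forall i j, (i <= j <= n)%nat -> phi j <= phi i) ->
  dep_pmf q n 0 * p * (phi n - phi (S n)) >= 1.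
Proof.
  intros H.
  assert (Hle : sum_f_R0 (fun d => dep_pmf q n d * phi n +
      (if (d =? 0)%nat then dep_pmf q n 0 * p * (phi (S n) - phi n) else 0)) n <= Enu p q 1 phi n).
  { apply sum_Rle. intros d Hd. destruct d.
    - rewrite Nat.sub_0_r. replace (n + 1)%nat with (S n) by lia. simpl Nat.eqb. cbv iota.
      right. ring.
    - simpl Nat.eqb. cbv iota.
      assert (phi n <= phi (n - S d)) by (apply H; lia).
      assert (phi n <= phi (n - S d + 1)) by (apply H; lia).
      assert (0 <= dep_pmf q n (S d)) by (apply dep_nonneg; lra).
      rewrite Rplus_0_r. apply Rmult_le_compat_l; [assumption|].
      assert (0 <= (1 - p) * (phi (n - S d) - phi n)) by (apply Rmult_le_pos; lra).
      assert (0 <= p * (phi (n - S d + 1) - phi n)) by (apply Rmult_le_pos; lra).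
      lra. }
  rewrite sum_ind0, sum_dep_const, phi_eq in Hle. lra.
Qed.

Lemma phi_mono n : forall i j, (i <= j <= n)%nat -> phi j <= phi i.
Proof.
  induction n; intros i j Hij.
  - replace i with 0%nat by lia. replace j with 0%nat by lia. lra.
  - destruct (Nat.leb_spec j n). apply IHn; lia.
    replace j with (S n) by lia.
    assert (Hs := phi_step n IHn).
    assert (Hf := dep0_pos q q0 hq n).
    assert (phi (S n) < phi n).
    { destruct (Rlt_or_le (phi (S n)) (phi n)); [assumption|].
      assert (dep_pmf q n 0 * p * (phi n - phi (S n)) <= 0).
      { assert (0 < dep_pmf q n 0 * p) by (apply Rmult_lt_0_compat; lra). nra. }
      lra. }
    destruct (Nat.leb_spec i n).
    + assert (phi n <= phi i) by (apply IHn; lia). lra.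
    + replace i with (S n) by lia. lra.
Qed.

Definition A K := Enu p q 0 phi (S K) - phi (S K).

Lemma A_nonneg K : 0 <= A K.
Proof.
  unfold A. assert (phi (S K) <= Enu p q 0 phi (S K)).
  { rewrite <- (sum_dep_const (S K) (phi (S K))). unfold Enu. apply sum_Rle.
    intros d Hd. assert (phi (S K) <= phi (S K - d)) by (apply (phi_mono (S K)); lia).
    assert (0 <= dep_pmf q (S K) d) by (apply dep_nonneg; lra). nra. }
  lra.
Qed.

Lemma ineq1 K : dep_pmf q (S K) 0 * p * (phi (S K) - phi (S (S K))) >= 1 + (1 - p) * A K.
Proof.
  set (X := fun d => dep_pmf q (S K) d * ((1 - 0 * p) * phi (S K - d)%nat + 0 * p * phi (S K - d + 1)%nat)).
  assert (Hle : sum_f_R0 (fun d => (X d * (1 - p) + dep_pmf q (S K) d * phi (S K) * p) +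
      (if (d =? 0)%nat then dep_pmf q (S K) 0 * p * (phi (S (S K)) - phi (S K)) else 0)) (S K)
      <= Enu p q 1 phi (S K)).
  { apply sum_Rle. intros d Hd. unfold X. destruct d.
    - rewrite Nat.sub_0_r. replace (S K + 1)%nat with (S (S K)) by lia. simpl Nat.eqb. cbv iota.
      right. ring.
    - simpl Nat.eqb. cbv iota.
      assert (phi (S K) <= phi (S K - S d + 1)) by (apply (phi_mono (S K)); lia).
      assert (0 <= dep_pmf q (S K) (S d)) by (apply dep_nonneg; lra).
      assert (0 <= dep_pmf q (S K) (S d) * (p * (phi (S K - S d + 1) - phi (S K)))).
      { apply Rmult_le_pos; [assumption|]. apply Rmult_le_pos; lra. }
      lra. }
  rewrite sum_ind0, sum_plus, <- (scal_sum X), <- (scal_sum (fun d => dep_pmf q (S K) d * phi (S K))),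
    sum_dep_const, phi_eq in Hle.
  unfold A. unfold Enu at 1. fold X. lra.
Qed.

Lemma ineq2 K : A (S K) >= (1 - dep_pmf q (S (S K)) 0) * (phi (S K) - phi (S (S K))).
Proof.
  set (dl := phi (S K) - phi (S (S K))).
  assert (Hle : sum_f_R0 (fun d => dep_pmf q (S (S K)) d * (phi (S (S K)) + dl) +
     (if (d =? 0)%nat then - (dep_pmf q (S (S K)) 0 * dl) else 0)) (S (S K)) <= Enu p q 0 phi (S (S K))).
  { apply sum_Rle. intros d Hd. destruct d.
    - rewrite Nat.sub_0_r. simpl Nat.eqb. cbv iota. right. unfold dl. ring.
    - simpl Nat.eqb. cbv iota.
      assert (phi (S K) <= phi (S (S K) - S d)) by (apply (phi_mono (S K)); lia).
      assert (0 <= dep_pmf q (S (S K)) (S d)) by (apply dep_nonneg; lra).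
      unfold dl. nra. }
  rewrite sum_ind0, sum_dep_const in Hle. unfold A. lra.
Qed.

Lemma A_step K : A K < A (S K).
Proof.
  assert (H1 := ineq1 K). assert (H2 := ineq2 K). assert (H0 := A_nonneg K).
  assert (Hf := dep0_le q q0 hq p (S K) hp h2p ltac:(lia)).
  assert (Hf' := dep0_le q q0 hq p (S (S K)) hp h2p ltac:(lia)).
  assert (Hd : phi (S (S K)) <= phi (S K)) by (apply (phi_mono (S (S K))); lia).
  set (dl := phi (S K) - phi (S (S K))) in *.
  set (f := dep_pmf q (S K) 0) in *. set (f' := dep_pmf q (S (S K)) 0) in *.
  assert (Hdl : 0 <= dl) by (unfold dl; lra).
  assert (0 <= (1 - p - f) * (p * dl)) by (apply Rmult_le_pos; [lra| apply Rmult_le_pos; lra]).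
  assert (p * dl > A K).
  { destruct (Rlt_or_le (A K) (p * dl)); [lra|].
    assert (0 <= (1 - p) * (A K - p * dl)) by (apply Rmult_le_pos; lra). lra. }
  assert (0 <= (1 - f' - p) * dl) by (apply Rmult_le_pos; lra).
  lra.
Qed.

Lemma A_mono k k' : (k < k')%nat -> A k < A k'.
Proof.
  intros H. induction H. apply A_step. assert (T := A_step m). lra.
Qed.

Lemma kac k (pi : nat -> R) : stationary p q k pi ->
  sum_f_R0 pi k = (1 - sum_f_R0 pi k) * A k.
Proof.
  intros hst. assert (D := duality k pi hst phi). assert (T := tot_fin k pi hst).
  rewrite tech5 in D, T. rewrite nu_gt in D by lia.
  rewrite (sum_eq _ pi) in D.
  - unfold A. replace (pi (S k)) with (1 - sum_f_R0 pi k) in D by lra.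
    replace (Enu p q 0 phi (S k) - phi (S k)) with (- (phi (S k) - Enu p q 0 phi (S k))) by ring.
    lra.
  - intros i Hi. rewrite nu_le by assumption. rewrite phi_eq. ring.
Qed.
End Chain.

Theorem lemma8 (p q : R) (hp : 0 < p) (h2p : 2 * p < q) (hq : q < 1)
  (k k' : nat) (pik pik' : nat -> R) (hkk : (k < k')%nat)
  (hk : stationary p q k pik) (hk' : stationary p q k' pik') :
  sum_f_R0 pik k < sum_f_R0 pik' k'.
Proof.
  assert (E1 := kac p q hp h2p hq k pik hk).
  assert (E2 := kac p q hp h2p hq k' pik' hk').
  assert (M := A_mono p q hp h2p hq k k' hkk).
  assert (N0 := A_nonneg p q hp h2p hq k).
  set (a := A p q k) in *. set (b := A p q k') in *.
  set (s := sum_f_R0 pik k) in *. set (t := sum_f_R0 pik' k') in *.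
  assert (Hs : 1 - s = / (1 + a)).
  { apply (Rmult_eq_reg_r (1 + a)); [|lra]. rewrite Rinv_l by lra. lra. }
  assert (Ht : 1 - t = / (1 + b)).
  { apply (Rmult_eq_reg_r (1 + b)); [|lra]. rewrite Rinv_l by lra. lra. }
  assert (/ (1 + b) < / (1 + a)) by (apply Rinv_lt_contravar; [apply Rmult_lt_0_compat|]; lra).
  lra.
Qed.
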